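(* Let $\tau>0$, let $\Gamma^0$ be a closed polyhedral surface with $\boldsymbol X^0\in[\mathbb K^0]^3$ the identity and $\mathcal H^0\in\mathbb K^0$ given, and let $\alpha^m\ge0$ for all $m\ge0$. Suppose that for each $m\ge0$, $(\boldsymbol X^{m+1},V^{m+1},\beta_1^{m+1},\beta_2^{m+1},\mathcal H^{m+1})\in[\mathbb K^m]^3\times(\mathbb K^m)^4$ satisfies $$\Big(\tfrac{\boldsymbol X^{m+1}-\boldsymbol X^m}{\tau}\cdot\boldsymbol n^m,\phi^h\Big)^h_{\Gamma^m}=(V^{m+1},\phi^h)^h_{\Gamma^m}\quad\forall\phi^h\in\mathbb K^m,$$ $$\big((\boldsymbol X^{m+1}-\boldsymbol X^m)\cdot\boldsymbol\tau_i^m,\psi_i^h\big)^h_{\Gamma^m}=0,\quad i=1,2,\quad\forall\psi_1^h,\psi_2^h\in\mathbb K^m,$$ $$\Big(V^{m+1}\boldsymbol n^m+\alpha^m\sum_{i=1,2}\beta_i^{m+1}\boldsymbol\tau_i^m,\boldsymbol\omega^h\Big)^h_{\Gamma^m}=\Big\langle\mathcal H^{m+1}\mathbf A^m-\boldsymbol n^m(\nabla_\Gamma\mathcal H^{m+1})^T-\tfrac12(\mathcal H^{m+1})^2\nabla_\Gamma\boldsymbol X^{m+1},\nabla_\Gamma\boldsymbol\omega^h\Big\rangle^h_{\Gamma^m}\quad\forall\boldsymbol\omega^h\in[\mathbb K^m]^3,$$ $$(\mathcal H^{m+1}-\mathcal H^m,\varphi^h)^h_{\Gamma^m}=\big\langle\nabla_\Gamma(\boldsymbol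 X^{m+1}-\boldsymbol X^m),\boldsymbol n^m(\nabla_\Gamma\varphi^h)^T-\varphi^h\mathbf A^m\big\rangle^h_{\Gamma^m}\quad\forall\varphi^h\in\mathbb K^m,$$ and $\Gamma^{m+1}:=\boldsymbol X^{m+1}(\Gamma^m)$ is again a polyhedral surface with nondegenerate triangles. Then for every $\tau>0$ the discrete Willmore energy $W^m:=\frac12(\mathcal H^m,\mathcal H^m)^h_{\Gamma^m}$ satisfies $W^{m+1}\le W^m\le W^0$ for all $m\ge0$.
   Context: Polyhedral setting: $\Gamma^m=\bigcup_{j=1}^J\overline{\sigma_j^m}\subset\mathbb R^3$ is a closed polyhedral surface made of nonoverlapping nondegenerate triangles $\sigma_j^m$ with vertices $\boldsymbol q^m_{j_1},\boldsymbol q^m_{j_2},\boldsymbol q^m_{j_3}$, ordered so that $\mathcal J\{\sigma_j^m\}=(\boldsymbol q^m_{j_2}-\boldsymbol q^m_{j_1})\times(\boldsymbol q^m_{j_3}-\boldsymbol q^m_{j_1})$ points outward; $|\sigma_j^m|=\frac12|\mathcal J\{\sigma_j^m\}|$, and $\boldsymbol n^m|_{\sigma_j^m}=\mathcal J\{\sigma_j^m\}/|\mathcal J\{\sigma_j^m\}|$ (piecewise constant outward normal). Tangent fields: $\boldsymbol\tau_1^m|_{\sigma_j^m}=\frac{\boldsymbol q^m_{j_2}-\boldsymbol q^m_{j_1}}{|\boldsymbol q^m_{j_2}-\boldsymbol q^m_{j_1}|}$, $\boldsymbol\tau_2^m|_{\sigma_j^m}=\frac{\boldsymbol q^m_{j_3}-\boldsymbol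 q^m_{j_1}}{|\boldsymbol q^m_{j_3}-\boldsymbol q^m_{j_1}|}$. $\mathbb K^m$ is the space of continuous functions on $\Gamma^m$ that are affine on each triangle. $\boldsymbol X^m\in[\mathbb K^m]^3$ is the identity on $\Gamma^m$; $\boldsymbol X^{m+1}\in[\mathbb K^m]^3$ parameterizes $\Gamma^{m+1}$ with triangles $\sigma_j^{m+1}=\boldsymbol X^{m+1}(\sigma_j^m)$ (same connectivity), so functions in $\mathbb K^m$ and $\mathbb K^{m+1}$ are identified through their vertex values. Discrete surface gradient on $\Gamma^m$: for $g\in\mathbb K^m$, on a triangle $\sigma=\{\boldsymbol q_1,\boldsymbol q_2,\boldsymbol q_3\}$ with normal $\boldsymbol n$, $$\nabla_\Gamma g|_\sigma=\frac{g(\boldsymbol q_1)(\boldsymbol q_2-\boldsymbol q_3)\times\boldsymbol n+g(\boldsymbol q_2)(\boldsymbol q_3-\boldsymbol q_1)\times\boldsymbol n+g(\boldsymbol q_3)(\boldsymbol q_1-\boldsymbol q_2)\times\boldsymbol n}{|\mathcal J\{\sigma\}|};$$ for vector functions $\nabla_\Gamma\boldsymbol g$ is the matrix with $i$-th row $(\nabla_\Gamma g_i)^T$. $\mathbf A^m=\nabla_\Gamma\boldsymbol w^m$ where $\boldsymbol w^m\in[\mathbb K^m]^3$ is a given (vertex unit normal) field. Mass-lumped inner products: for scalar/vector functions $u,v$ continuous on each closed triangle, $$(u,v)^h_{\Gamma^m}=\tfrac13\sum_{j=1}^J\sum_{k=1}^3|\sigma_j^m|\,u((\boldsymbol q^m_{j_k})^-)\cdot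 v((\boldsymbol q^m_{j_k})^-),$$ and for matrix functions $\langle\boldsymbol U,\boldsymbol V\rangle^h_{\Gamma^m}=\tfrac13\sum_j\sum_k|\sigma_j^m|\,\boldsymbol U((\boldsymbol q^m_{j_k})^-):\boldsymbol V((\boldsymbol q^m_{j_k})^-)$, where $g((\boldsymbol q)^-)$ is the limit at vertex $\boldsymbol q$ from within $\sigma_j^m$ and $\boldsymbol U:\boldsymbol V=\mathrm{Tr}(\boldsymbol U^T\boldsymbol V)$. *)

(* Defs.v *)
From HB Require Import structures.
From mathcomp Require Import all_boot all_order all_algebra.
From mathcomp Require Import reals.
Set Implicit Arguments. Unset Strict Implicit. Unset Printing Implicit Defensive.
Import Order.TTheory GRing.Theory Num.Theory.
Local Open Scope ring_scope.

Notation vec R := 'rV[R]_3.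

Definition i0 : 'I_3 := @Ordinal 3 0 isT.
Definition i1 : 'I_3 := @Ordinal 3 1 isT.
Definition i2 : 'I_3 := @Ordinal 3 2 isT.
Definition nxt (k : 'I_3) : 'I_3 :=
  if k == i0 then i1 else if k == i1 then i2 else i0.

Definition dot {R : realType} (u v : vec R) : R := \sum_(i < 3) u 0 i * v 0 i.
Definition vnorm {R : realType} (u : vec R) : R := Num.sqrt (dot u u).
Definition cross {R : realType} (u v : vec R) : vec R :=
  \row_(i < 3) (if i == i0 then u 0 i1 * v 0 i2 - u 0 i2 * v 0 i1
                else if i == i1 then u 0 i2 * v 0 i0 - u 0 i0 * v 0 i2
                else u 0 i0 * v 0 i1 - u 0 i1 * v 0 i0).
Definition frob {R : realType} (U V : 'M[R]_3) : R := \tr (U^T *m V).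

(* A mesh: N vertices, J triangles; tri j k is the k-th vertex (k = 0,1,2 for
   q_{j_1}, q_{j_2}, q_{j_3}) of triangle j.  Positions P : 'I_N -> vec R
   (this is the parameterization X^m of Gamma^m by vertex values).
   Elements of K^m are identified with their vertex values 'I_N -> R. *)
Section Mesh.
Variables (R : realType) (N J : nat) (tri : 'I_J -> 'I_3 -> 'I_N) (P : 'I_N -> vec R).

Definition mesh_vtx (j : 'I_J) (k : 'I_3) : vec R := P (tri j k).
Definition mesh_jac (j : 'I_J) : vec R := cross (mesh_vtx j i1 - mesh_vtx j i0) (mesh_vtx j i2 - mesh_vtx j i0).
Definition mesh_area (j : 'I_J) : R := vnorm (mesh_jac j) / 2.
Definition mesh_normal (j : 'I_J) : vec R := (vnorm (mesh_jac j))^-1 *: mesh_jac j.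
Definition mesh_tau1 (j : 'I_J) : vec R :=
  (vnorm (mesh_vtx j i1 - mesh_vtx j i0))^-1 *: (mesh_vtx j i1 - mesh_vtx j i0).
Definition mesh_tau2 (j : 'I_J) : vec R :=
  (vnorm (mesh_vtx j i2 - mesh_vtx j i0))^-1 *: (mesh_vtx j i2 - mesh_vtx j i0).

Definition mesh_sgrad (g : 'I_N -> R) (j : 'I_J) : vec R :=
  (vnorm (mesh_jac j))^-1 *:
    (g (tri j i0) *: cross (mesh_vtx j i1 - mesh_vtx j i2) (mesh_normal j)
   + g (tri j i1) *: cross (mesh_vtx j i2 - mesh_vtx j i0) (mesh_normal j)
   + g (tri j i2) *: cross (mesh_vtx j i0 - mesh_vtx j i1) (mesh_normal j)).
Definition mesh_sgradv (g : 'I_N -> vec R) (j : 'I_J) : 'M[R]_3 :=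
  \matrix_(i < 3, c < 3) (mesh_sgrad (fun v => g v 0 i) j) 0 c.

(* mass-lumped inner products; a function continuous on each closed
   triangle is represented by its vertex limits u j k = u((q_{j_k})^-) *)
Definition lip (u v : 'I_J -> 'I_3 -> R) : R :=
  3^-1 * \sum_(j < J) \sum_(k < 3) mesh_area j * (u j k * v j k).
Definition lipv (u v : 'I_J -> 'I_3 -> vec R) : R :=
  3^-1 * \sum_(j < J) \sum_(k < 3) mesh_area j * dot (u j k) (v j k).
Definition lipm (U V : 'I_J -> 'I_3 -> 'M[R]_3) : R :=
  3^-1 * \sum_(j < J) \sum_(k < 3) mesh_area j * frob (U j k) (V j k).

Definition nondeg_mesh : Prop := forall j : 'I_J, mesh_jac j != 0.
End Mesh.

Definition mesh_lift {T : Type} {N J : nat} (tri : 'I_J -> 'I_3 -> 'I_N) (g : 'I_N -> T)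
  : 'I_J -> 'I_3 -> T := fun j k => g (tri j k).

(* combinatorial closedness of the triangulation: each triangle has three
   distinct vertices, every vertex belongs to some triangle, and every
   oriented edge (a,b) of a triangle occurs reversed, (b,a), in exactly one
   triangle (so the surface has no boundary and is consistently oriented). *)
Definition closed_mesh (N J : nat) (tri : 'I_J -> 'I_3 -> 'I_N) : Prop :=
  [/\ forall j, injective (tri j),
      forall v : 'I_N, exists j k, tri j k = v &
      forall (j : 'I_J) (k : 'I_3), exists! jk : 'I_J * 'I_3,
        tri jk.1 jk.2 = tri j (nxt k) /\ tri jk.1 (nxt jk.2) = tri j k].

Definition willmore {R : realType} (N J : nat) (tri : 'I_J -> 'I_3 -> 'I_N)
  (P : 'I_N -> vec R) (H : 'I_N -> R) : R :=
  2^-1 * lip tri P (mesh_lift tri H) (mesh_lift tri H).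

(* Main.v *)
Require Import Defs.
From HB Require Import structures.
From mathcomp Require Import all_boot all_order all_algebra.
From mathcomp Require Import reals.
From mathcomp Require Import ring lra.
Import Order.TTheory GRing.Theory Num.Theory.
Local Open Scope ring_scope.
Section S.
Variable R : realType.
Implicit Types u v x a b c d : vec R.

Lemma sum3 (F : 'I_3 -> R) : \sum_(i < 3) F i = F i0 + F i1 + F i2.
Proof.
rewrite !big_ord_recl big_ord0 addr0 addrA.
by congr (_ + _ + _); congr F; apply: val_inj.
Qed.

Lemma dotE u v : dot u v = u 0 i0 * v 0 i0 + u 0 i1 * v 0 i1 + u 0 i2 * v 0 i2.
Proof. by rewrite /dot sum3. Qed.

Lemma crossE0 u v : cross u v 0 i0 = u 0 i1 * v 0 i2 - u 0 i2 * v 0 i1.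
Proof. by rewrite /cross mxE. Qed.
Lemma crossE1 u v : cross u v 0 i1 = u 0 i2 * v 0 i0 - u 0 i0 * v 0 i2.
Proof. by rewrite /cross mxE. Qed.
Lemma crossE2 u v : cross u v 0 i2 = u 0 i0 * v 0 i1 - u 0 i1 * v 0 i0.
Proof. by rewrite /cross mxE. Qed.

Lemma ord3P (P : 'I_3 -> Prop) : P i0 -> P i1 -> P i2 -> forall i, P i.
Proof.
move=> h0 h1 h2 [[|[|[|k]]] Hk] //.
- by have -> : Ordinal Hk = i0 by apply: val_inj.
- by have -> : Ordinal Hk = i1 by apply: val_inj.
- by have -> : Ordinal Hk = i2 by apply: val_inj.
Qed.

Lemma vecP u v : u 0 i0 = v 0 i0 -> u 0 i1 = v 0 i1 -> u 0 i2 = v 0 i2 -> u = v.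
Proof.
move=> h0 h1 h2; apply/rowP; apply: ord3P => //.
Qed.
Lemma dotC u v : dot u v = dot v u.
Proof. rewrite !dotE; ring. Qed.
Lemma dotDl u v x : dot (u + v) x = dot u x + dot v x.
Proof. rewrite !dotE !mxE; ring. Qed.
Lemma dotBl u v x : dot (u - v) x = dot u x - dot v x.
Proof. rewrite !dotE !mxE; ring. Qed.
Lemma dotZl (c : R) u x : dot (c *: u) x = c * dot u x.
Proof. rewrite !dotE !mxE; ring. Qed.
Lemma dotDr u v x : dot x (u + v) = dot x u + dot x v.
Proof. rewrite !dotE !mxE; ring. Qed.
Lemma dotBr u v x : dot x (u - v) = dot x u - dot x v.
Proof. rewrite !dotE !mxE; ring. Qed.
Lemma dotZr (c : R) u x : dot x (c *: u) = c * dot x u.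
Proof. rewrite !dotE !mxE; ring. Qed.
Lemma dotvv u : 0 <= dot u u.
Proof. rewrite dotE; rewrite -!expr2; apply: addr_ge0; [apply: addr_ge0|]; exact: sqr_ge0. Qed.
Lemma lagrange a b c d :
  dot (cross a b) (cross c d) = dot a c * dot b d - dot a d * dot b c.
Proof. rewrite !dotE !crossE0 !crossE1 !crossE2; ring. Qed.
Lemma dot_cross1 a b : dot a (cross a b) = 0.
Proof. rewrite !dotE !crossE0 !crossE1 !crossE2; ring. Qed.
Lemma dot_cross2 a b : dot b (cross a b) = 0.
Proof. rewrite !dotE !crossE0 !crossE1 !crossE2; ring. Qed.
Lemma vaddE u v i : (u + v) 0 i = u 0 i + v 0 i. Proof. by rewrite mxE. Qed.
Lemma vsubE u v i : (u - v) 0 i = u 0 i - v 0 i. Proof. by rewrite !mxE. Qed.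
Lemma vscaleE (c : R) u i : (c *: u) 0 i = c * u 0 i. Proof. by rewrite !mxE. Qed.
Lemma voppE u i : (- u) 0 i = - u 0 i. Proof. by rewrite !mxE. Qed.
Definition vE := (vsubE, vaddE, voppE, vscaleE, crossE0, crossE1, crossE2).

Definition grad3 (p0 p1 p2 : vec R) (g0 g1 g2 : R) : vec R :=
  (vnorm (cross (p1 - p0) (p2 - p0)))^-1 *:
    (g0 *: cross (p1 - p2) ((vnorm (cross (p1 - p0) (p2 - p0)))^-1 *: cross (p1 - p0) (p2 - p0))
   + g1 *: cross (p2 - p0) ((vnorm (cross (p1 - p0) (p2 - p0)))^-1 *: cross (p1 - p0) (p2 - p0))
   + g2 *: cross (p0 - p1) ((vnorm (cross (p1 - p0) (p2 - p0)))^-1 *: cross (p1 - p0) (p2 - p0))).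

Lemma grad3E p0 p1 p2 g0 g1 g2 :
  grad3 p0 p1 p2 g0 g1 g2 =
  ((vnorm (cross (p1 - p0) (p2 - p0)))^-1 * (vnorm (cross (p1 - p0) (p2 - p0)))^-1)
   *: ((g1 - g0) *: cross (p2 - p0) (cross (p1 - p0) (p2 - p0))
       - (g2 - g0) *: cross (p1 - p0) (cross (p1 - p0) (p2 - p0))).
Proof.
rewrite /grad3; move: (vnorm _)^-1 => t.
apply: vecP; rewrite !vE; move: (p0 0 i0) (p0 0 i1) (p0 0 i2) (p1 0 i0) (p1 0 i1) (p1 0 i2) (p2 0 i0) (p2 0 i1) (p2 0 i2) => x0 x1 x2 y0 y1 y2 z0 z1 z2; ring.
Qed.

Lemma dotvv0 u : dot u u = 0 -> u = 0.
Proof.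
rewrite dotE => h.
have h0 := sqr_ge0 (u 0 i0); have h1 := sqr_ge0 (u 0 i1); have h2 := sqr_ge0 (u 0 i2).
rewrite !expr2 in h0 h1 h2.
have e0 : u 0 i0 * u 0 i0 = 0 by lra.
have e1 : u 0 i1 * u 0 i1 = 0 by lra.
have e2 : u 0 i2 * u 0 i2 = 0 by lra.
apply: vecP; rewrite mxE; [move/eqP: e0|move/eqP: e1|move/eqP: e2]; by rewrite mulf_eq0 orbb => /eqP.
Qed.

Lemma vnorm_gt0 u : u != 0 -> 0 < vnorm u.
Proof.
move=> hu; rewrite /vnorm sqrtr_gt0 lt_neqAle dotvv andbT eq_sym.
by apply/eqP => /dotvv0 /eqP; apply/negP.
Qed.

Lemma vnorm_sq u : vnorm u ^+ 2 = dot u u.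
Proof. by rewrite /vnorm sqr_sqrtr // dotvv. Qed.

Lemma dot_cross1' a b : dot (cross a b) a = 0.
Proof. by rewrite dotC dot_cross1. Qed.
Lemma dot_cross2' a b : dot (cross a b) b = 0.
Proof. by rewrite dotC dot_cross2. Qed.

Lemma Wdot a b (x1 x2 y1 y2 : R) :
  dot (x1 *: cross b (cross a b) - x2 *: cross a (cross a b))
      (y1 *: cross b (cross a b) - y2 *: cross a (cross a b)) =
  dot (cross a b) (cross a b) *
  (x1 * y1 * dot b b - (x1 * y2 + x2 * y1) * dot a b + x2 * y2 * dot a a).
Proof.
rewrite !dotE !vE; move: (a 0 i0) (a 0 i1) (a 0 i2) (b 0 i0) (b 0 i1) (b 0 i2) => a0 a1 a2 b0 b1 b2.
ring.
Qed.

Lemma grad3_dot p0 p1 p2 g0 g1 g2 h0 h1 h2 :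
  cross (p1 - p0) (p2 - p0) != 0 ->
  dot (grad3 p0 p1 p2 g0 g1 g2) (grad3 p0 p1 p2 h0 h1 h2) =
  ((g1-g0)*(h1-h0) * dot (p2-p0) (p2-p0)
   - ((g1-g0)*(h2-h0) + (g2-g0)*(h1-h0)) * dot (p1-p0) (p2-p0)
   + (g2-g0)*(h2-h0) * dot (p1-p0) (p1-p0))
  / dot (cross (p1-p0) (p2-p0)) (cross (p1-p0) (p2-p0)).
Proof.
move=> hJ; rewrite !grad3E dotZl dotZr Wdot.
have hs := vnorm_gt0 _ hJ.
rewrite -vnorm_sq.
have : vnorm (cross (p1 - p0) (p2 - p0)) != 0 by rewrite gt_eqF.
move: (vnorm _) (dot (p1 - p0) (p1 - p0)) (dot (p1 - p0) (p2 - p0)) (dot (p2 - p0) (p2 - p0)) => s A D B hs0.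
by field.
Qed.
Lemma key_scalar (Aa B D F11 F12 F22 G11 G12 G22 C s s' : R) :
  0 < Aa -> 0 < s -> s^+2 = Aa*B - D^+2 -> 0 <= s' -> s'^+2 = F11*F22 - F12^+2 ->
  0 <= F11 -> 0 <= Aa^+2*F22 - 2*Aa*D*F12 + D^+2*F11 ->
  0 <= G11 -> 0 <= Aa^+2*G22 - 2*Aa*D*G12 + D^+2*G11 ->
  C = 2^-1 * (F11*B - 2*F12*D + F22*Aa) + 2^-1 * (G11*B - 2*G12*D + G22*Aa) - s^+2 ->
  s'/2 - s/2 <= s/2 * (C / s^+2).
Proof.
move=> Ha Hs hs2 Hs' hs'2 HF HP HG HPG ->.
set K := F11*B - 2*F12*D + F22*Aa.
set Y := G11*B - 2*G12*D + G22*Aa.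
set P := Aa^+2*F22 - 2*Aa*D*F12 + D^+2*F11.
set PG := Aa^+2*G22 - 2*Aa*D*G12 + D^+2*G11.
have hAK : Aa*K = P + s^+2*F11 by rewrite hs2 /K /P; ring.
have hAY : Aa*Y = PG + s^+2*G11 by rewrite hs2 /Y /PG; ring.
have h1 : F11*P - Aa^+2*s'^+2 = (D*F11 - Aa*F12)^+2 by rewrite hs'2 /P; ring.
have hY0 : 0 <= Y.
  have : 0 <= Aa * Y by rewrite hAY; apply: addr_ge0 => //; apply: mulr_ge0 => //; exact: sqr_ge0.
  by rewrite pmulr_rge0.
have hK0 : 0 <= K.
  have : 0 <= Aa * K by rewrite hAK; apply: addr_ge0 => //; apply: mulr_ge0 => //; exact: sqr_ge0.
  by rewrite pmulr_rge0.
have h2 : 4*(s^+2*F11)*P <= (Aa*K)^+2.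
  rewrite hAK; have := sqr_ge0 (P - s^+2*F11); nra.
have h3 : 4*(s^+2*Aa^+2*s'^+2) <= 4*(s^+2*F11)*P.
  have := sqr_ge0 (D*F11 - Aa*F12); have := sqr_ge0 s; nra.
have h4 : (2*Aa*s*s')^+2 <= (Aa*K)^+2.
  have -> : (2*Aa*s*s')^+2 = 4*(s^+2*Aa^+2*s'^+2) by ring.
  exact: le_trans h3 h2.
have h5 : 2*Aa*s*s' <= Aa*K.
  have hx : 0 <= 2*Aa*s*s' by apply: mulr_ge0 => //; apply: mulr_ge0; [apply: mulr_ge0|]; lra.
  have hy : 0 <= Aa*K by apply: mulr_ge0 => //; lra.
  by rewrite -(@ler_sqr _ (2*Aa*s*s') (Aa*K)) ?nnegrE.
have h6 : 2*s*s' <= K.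
  have -> : 2*s*s' = (2*Aa*s*s')/Aa by field; rewrite gt_eqF.
  by rewrite ler_pdivrMr // (mulrC K).
have hs0 : s != 0 by rewrite gt_eqF.
rewrite -subr_ge0.
have -> : s / 2 * ((2^-1 * K + 2^-1 * Y - s^+2) / s^+2) - (s' / 2 - s / 2)
   = (K + Y - 2 * s * s') / (4 * s) by field.
apply: divr_ge0; lra.
Qed.

Lemma quad_nonneg u v (A D : R) :
  0 <= A^+2 * dot v v - 2*A*D*dot u v + D^+2 * dot u u.
Proof.
suff -> : A^+2 * dot v v - 2*A*D*dot u v + D^+2 * dot u u
   = dot (A *: v - D *: u) (A *: v - D *: u) by apply: dotvv.
rewrite !(dotBl, dotBr, dotZl, dotZr) (dotC v u); ring.
Qed.

Variables (N J : nat) (tri : 'I_J -> 'I_3 -> 'I_N).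

Lemma sgradvE (P : 'I_N -> vec R) (g : 'I_N -> vec R) j k i :
  mesh_sgradv tri P g j k i = mesh_sgrad tri P (fun n : 'I_N => g n 0 k) j 0 i.
Proof. by rewrite mxE. Qed.
Lemma trE (A : 'M[R]_3) i k : A^T i k = A k i.
Proof. by rewrite mxE. Qed.

Lemma frob_sgradv (P : 'I_N -> vec R) (g h : 'I_N -> vec R) j :
  frob (mesh_sgradv tri P g j) (mesh_sgradv tri P h j) =
  \sum_(k < 3) dot (mesh_sgrad tri P (fun n : 'I_N => g n 0 k) j) (mesh_sgrad tri P (fun n : 'I_N => h n 0 k) j).
Proof.
rewrite /frob /mxtrace /dot.
under eq_bigr do rewrite mxE.
rewrite exchange_big /=; apply: eq_bigr => k _; apply: eq_bigr => i _.
by rewrite trE !sgradvE.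
Qed.

Lemma sgrad_grad3 (P : 'I_N -> vec R) g j :
  mesh_sgrad tri P g j = grad3 (P (tri j i0)) (P (tri j i1)) (P (tri j i2))
     (g (tri j i0)) (g (tri j i1)) (g (tri j i2)).
Proof. by []. Qed.

Lemma tri_ineq (P Q : 'I_N -> vec R) j : mesh_jac tri P j != 0 ->
  mesh_area tri Q j - mesh_area tri P j <=
  mesh_area tri P j * frob (mesh_sgradv tri P Q j) (mesh_sgradv tri P (fun n : 'I_N => Q n - P n) j).
Proof.
rewrite frob_sgradv sum3 !sgrad_grad3 /mesh_area /mesh_jac /mesh_vtx => hJ.
rewrite !grad3_dot // -(vnorm_sq (cross (_ - _) _)) !vsubE.
move: hJ.
move: (P (tri j i0)) (P (tri j i1)) (P (tri j i2)) (Q (tri j i0)) (Q (tri j i1)) (Q (tri j i2)) => p0 p1 p2 q0 q1 q2 hJ.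
set s := vnorm (cross (p1 - p0) (p2 - p0)).
rewrite -!mulrDl.
apply: (@key_scalar (dot (p1-p0) (p1-p0)) (dot (p2-p0) (p2-p0)) (dot (p1-p0) (p2-p0))
   (dot (q1-q0) (q1-q0)) (dot (q1-q0) (q2-q0)) (dot (q2-q0) (q2-q0))
   (dot (q1-q0-(p1-p0)) (q1-q0-(p1-p0))) (dot (q1-q0-(p1-p0)) (q2-q0-(p2-p0)))
   (dot (q2-q0-(p2-p0)) (q2-q0-(p2-p0)))).
- have hs := vnorm_gt0 _ hJ.
  have e := vnorm_sq (cross (p1 - p0) (p2 - p0)); rewrite lagrange -/s (dotC (p2 - p0) (p1 - p0)) in e.
  rewrite lt_neqAle dotvv andbT; apply/eqP => h0; rewrite -h0 mul0r sub0r in e.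
  have := sqr_ge0 (dot (p1 - p0) (p2 - p0)); have := mulr_gt0 hs hs; rewrite -expr2 e; nra.
- exact: vnorm_gt0.
- by rewrite /s vnorm_sq lagrange (dotC (p2 - p0)) expr2.
- by rewrite /vnorm sqrtr_ge0.
- by rewrite vnorm_sq lagrange (dotC (q2 - q0)) expr2.
- exact: dotvv.
- exact: quad_nonneg.
- exact: dotvv.
- exact: quad_nonneg.
- rewrite /s vnorm_sq lagrange !dotE !vE.
  move: (p0 0 i0) (p0 0 i1) (p0 0 i2) (p1 0 i0) (p1 0 i1) (p1 0 i2) (p2 0 i0) (p2 0 i1) (p2 0 i2) => x0 x1 x2 y0 y1 y2 z0 z1 z2.
  move: (q0 0 i0) (q0 0 i1) (q0 0 i2) (q1 0 i0) (q1 0 i1) (q1 0 i2) (q2 0 i0) (q2 0 i1) (q2 0 i2) => u0 u1 u2 v0 v1 v2 w0 w1 w2.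
  by field.
Qed.

Lemma frobC (U V : 'M[R]_3) : frob U V = frob V U.
Proof. by rewrite /frob -mxtrace_tr trmx_mul trmxK. Qed.
Lemma frobBr (U V W : 'M[R]_3) : frob U (V - W) = frob U V - frob U W.
Proof. by rewrite /frob mulmxBr raddfB. Qed.
Lemma frobZr (U V : 'M[R]_3) (c : R) : frob U (c *: V) = c * frob U V.
Proof. by rewrite /frob -scalemxAr mxtraceZ. Qed.

Lemma frob_id (M A B C : 'M[R]_3) (x y : R) :
  frob (x *: A - B - y *: C) M + frob M (B - x *: A) = - (y * frob C M).
Proof.
rewrite (frobC _ M) !frobBr !frobZr (frobC C M); ring.
Qed.

Definition dsum (f : 'I_J -> 'I_3 -> R) := \sum_(j < J) \sum_(k < 3) f j k.
Lemma dsum_le f g : (forall j k, f j k <= g j k) -> dsum f <= dsum g.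
Proof. by move=> h; apply: ler_sum => j _; apply: ler_sum => k _. Qed.
Lemma dsumD f g : dsum (fun j k => f j k + g j k) = dsum f + dsum g.
Proof. rewrite /dsum -big_split /=; apply: eq_bigr => j _; by rewrite big_split. Qed.
Lemma dsumB f g : dsum (fun j k => f j k - g j k) = dsum f - dsum g.
Proof. rewrite /dsum -sumrB /=; apply: eq_bigr => j _; by rewrite sumrB. Qed.
Lemma dsumZ (c : R) f : dsum (fun j k => c * f j k) = c * dsum f.
Proof. rewrite /dsum mulr_sumr; apply: eq_bigr => j _; by rewrite mulr_sumr. Qed.
Lemma dsum_ext f g : (forall j k, f j k = g j k) -> dsum f = dsum g.
Proof. by move=> h; apply: eq_bigr => j _; apply: eq_bigr => k _. Qed.

Lemma lipE (P : 'I_N -> vec R) (f g : 'I_J -> 'I_3 -> R) :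
  lip tri P f g = 3^-1 * dsum (fun j k => mesh_area tri P j * (f j k * g j k)).
Proof. by []. Qed.
Lemma lipvE (P : 'I_N -> vec R) (f g : 'I_J -> 'I_3 -> vec R) :
  lipv tri P f g = 3^-1 * dsum (fun j k => mesh_area tri P j * dot (f j k) (g j k)).
Proof. by []. Qed.
Lemma lipmE (P : 'I_N -> vec R) (f g : 'I_J -> 'I_3 -> 'M[R]_3) :
  lipm tri P f g = 3^-1 * dsum (fun j k => mesh_area tri P j * frob (f j k) (g j k)).
Proof. by []. Qed.

Lemma SS_combine (G0 G1 L3 R3 L4 R4 E1 E1r E2 E2' : 'I_J -> 'I_3 -> R) (tau : R) :
  3^-1 * dsum E1 = 3^-1 * dsum E1r -> 3^-1 * dsum E2 = 0 -> 3^-1 * dsum E2' = 0 ->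
  3^-1 * dsum L3 = 3^-1 * dsum R3 -> 3^-1 * dsum L4 = 3^-1 * dsum R4 ->
  (forall j k, L3 j k = tau * E1 j k + E2 j k + E2' j k) ->
  (forall j k, 0 <= E1r j k) -> 0 <= tau ->
  (forall j k, R3 j k + R4 j k - L4 j k <= 2^-1 * G0 j k - 2^-1 * G1 j k) ->
  2^-1 * (3^-1 * dsum G1) <= 2^-1 * (3^-1 * dsum G0).
Proof.
have h3 : (3 : R)^-1 != 0 by rewrite invr_eq0 pnatr_eq0.
move=> e1 e2 e2' e3 e4 hL hE ht hp.
move/(mulfI h3): e1 => e1; move/eqP: e2; rewrite mulf_eq0 (negbTE h3) /= => /eqP e2.
move/eqP: e2'; rewrite mulf_eq0 (negbTE h3) /= => /eqP e2'.
move/(mulfI h3): e3 => e3; move/(mulfI h3): e4 => e4.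
have hs := dsum_le (fun j k => R3 j k + R4 j k - L4 j k) (fun j k => 2^-1 * G0 j k - 2^-1 * G1 j k) hp.
rewrite (dsumB (fun j k => R3 j k + R4 j k)) (dsumD R3 R4) in hs.
rewrite (dsumB (fun j k => 2^-1 * G0 j k) (fun j k => 2^-1 * G1 j k)) (dsumZ 2^-1 G0) (dsumZ 2^-1 G1) in hs.
have eL3 : dsum L3 = tau * dsum E1 + dsum E2 + dsum E2'.
  rewrite -(dsumZ tau E1) -(dsumD (fun j k => tau * E1 j k) E2).
  by rewrite -(dsumD (fun j k => tau * E1 j k + E2 j k) E2'); apply: dsum_ext.
have hE1 : 0 <= dsum E1r by rewrite /dsum; apply: sumr_ge0 => j _; apply: sumr_ge0 => k _.
have : 0 <= dsum L3 by rewrite eL3 e2 e2' e1 !addr0; apply: mulr_ge0.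
rewrite e3 => hR3.
have h3p : (0 : R) <= 3^-1 by rewrite invr_ge0.
rewrite -e4 in hs; lra.
Qed.
End S.

Theorem theorem5p1 (R : realType) (N J : nat) (tri : 'I_J -> 'I_3 -> 'I_N)
  (tau : R) (alpha : nat -> R)
  (X : nat -> 'I_N -> vec R) (V beta1 beta2 H : nat -> 'I_N -> R)
  (w : nat -> 'I_N -> vec R) :
  0 < tau ->
  (forall m, 0 <= alpha m) ->
  closed_mesh tri ->
  (* Gamma^m (Gamma^0 and every Gamma^{m+1}) has nondeg_mesh triangles *)
  (forall m, nondeg_mesh tri (X m)) ->
  (* w^m is a vertex unit mesh_normal field *)
  (forall m v, vnorm (w m v) = 1) ->
  (forall m (phi : 'I_N -> R),
     lip tri (X m)
       (fun j k => dot (tau^-1 *: (X m.+1 (tri j k) - X m (tri j k))) (mesh_normal tri (X m) j))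
       (mesh_lift tri phi)
     = lip tri (X m) (mesh_lift tri (V m.+1)) (mesh_lift tri phi)) ->
  (forall m (psi : 'I_N -> R),
     lip tri (X m)
       (fun j k => dot (X m.+1 (tri j k) - X m (tri j k)) (mesh_tau1 tri (X m) j))
       (mesh_lift tri psi) = 0) ->
  (forall m (psi : 'I_N -> R),
     lip tri (X m)
       (fun j k => dot (X m.+1 (tri j k) - X m (tri j k)) (mesh_tau2 tri (X m) j))
       (mesh_lift tri psi) = 0) ->
  (forall m (om : 'I_N -> vec R),
     lipv tri (X m)
       (fun j k => V m.+1 (tri j k) *: mesh_normal tri (X m) j
          + alpha m *: (beta1 m.+1 (tri j k) *: mesh_tau1 tri (X m) j
                        + beta2 m.+1 (tri j k) *: mesh_tau2 tri (X m) j))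
       (mesh_lift tri om)
     = lipm tri (X m)
       (fun j k => H m.+1 (tri j k) *: mesh_sgradv tri (X m) (w m) j
          - (mesh_normal tri (X m) j)^T *m mesh_sgrad tri (X m) (H m.+1) j
          - (2^-1 * H m.+1 (tri j k) ^+ 2) *: mesh_sgradv tri (X m) (X m.+1) j)
       (fun j k => mesh_sgradv tri (X m) om j)) ->
  (forall m (phi : 'I_N -> R),
     lip tri (X m) (mesh_lift tri (fun v => H m.+1 v - H m v)) (mesh_lift tri phi)
     = lipm tri (X m)
       (fun j k => mesh_sgradv tri (X m) (fun v => X m.+1 v - X m v) j)
       (fun j k => (mesh_normal tri (X m) j)^T *m mesh_sgrad tri (X m) phi j
                   - phi (tri j k) *: mesh_sgradv tri (X m) (w m) j)) ->
  forall m,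
    willmore tri (X m.+1) (H m.+1) <= willmore tri (X m) (H m)
    /\ willmore tri (X m) (H m) <= willmore tri (X 0) (H 0).
Proof.
move=> htau halpha _ hnd _ E1 E2 E2' E3 E4.
have step : forall m, willmore tri (X m.+1) (H m.+1) <= willmore tri (X m) (H m).
  move=> m.
  have e1 := E1 m (V m.+1).
  have e2 := E2 m (fun v => alpha m * beta1 m.+1 v).
  have e2' := E2' m (fun v => alpha m * beta2 m.+1 v).
  have e3 := E3 m (fun v => X m.+1 v - X m v).
  have e4 := E4 m (H m.+1).
  rewrite /willmore !lipE.
  rewrite !lipE in e1 e2 e2' e4. rewrite lipvE lipmE in e3.
  have ha : forall (P : 'I_N -> vec R) j, 0 <= mesh_area tri P j.
    by move=> P j; rewrite /mesh_area divr_ge0 // sqrtr_ge0.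
  apply: (@SS_combine R J _ _ _ _ _ _ _ _ _ _ tau e1 e2 e2' e3 e4).
  - move=> j k /=; rewrite /mesh_lift.
    have ht0 : tau != 0 by rewrite gt_eqF.
    move: (X m.+1 (tri j k) - X m (tri j k)) (mesh_normal tri (X m) j) (mesh_tau1 tri (X m) j) (mesh_tau2 tri (X m) j) => d n t1 t2.
    rewrite !(dotDl, dotZl) (@dotC R n d) (@dotC R t1 d) (@dotC R t2 d).
    by field.
  - move=> j k /=; apply: mulr_ge0 => //; rewrite -expr2; exact: sqr_ge0.
  - exact: ltW.
  - move=> j k /=; rewrite /mesh_lift.
    rewrite -mulrDr frob_id.
    have ti := @tri_ineq R N J tri (X m) (X m.+1) j (hnd m j).
    have a0 := ha (X m) j.
    move: ti a0.
    move: (mesh_area tri (X m) j) (mesh_area tri (X m.+1) j) (frob _ _) (H m.+1 (tri j k)) (H m (tri j k)) => a a' g h hm ti a0.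
    have p1 : 0 <= h^+2 * (a * g - (a' - a)) by apply: mulr_ge0; [exact: sqr_ge0| rewrite subr_ge0].
    have p2 : 0 <= a * (h - hm)^+2 by apply: mulr_ge0 => //; exact: sqr_ge0.
    nra.
move=> m; split; first exact: step.
elim: m => [|m IH]; first exact: lexx.
exact: le_trans (step m) IH.
Qed.
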